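(* Let $\mathfrak g$ be a perfect Lie algebra (i.e. $[\mathfrak g,\mathfrak g]=\mathfrak g$), let $k\ge2$ be an integer and let $m\in\mathbb F$ with $m\ne0$ and $m\notin\{-1,-2,-3,\dots\}$. If a linear map $f:\mathfrak g\to\mathfrak g$ satisfies $$m\, f([x_1,\dots,x_k])+\sum_{i=2}^{k}[x_1,\dots,x_{i-1},f([x_i,\dots,x_k])]=0$$ for all $x_1,\dots,x_k\in\mathfrak g$, then $f=0$.
   Context: All Lie algebras are finite-dimensional over an algebraically closed field $\mathbb F$ of characteristic zero. For $x_1,\dots,x_{n}\in\mathfrak g$, $[x_1,\dots,x_{n}]$ denotes the right-nested bracket $[x_1,[x_2,[\dots,[x_{n-1},x_{n}]\dots]]]$, with $[x]=x$ for a single element; thus the term $i=k$ of the sum is $[x_1,\dots,x_{k-1},f(x_k)]$. *)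

(* Defs.v *)
From HB Require Import structures.
From mathcomp Require Import all_boot all_order all_algebra.
Set Implicit Arguments. Unset Strict Implicit. Unset Printing Implicit Defensive.
Import Order.TTheory GRing.Theory Num.Theory.
Local Open Scope ring_scope.

Record lie_algebra (F : fieldType) (V : vectType F) := LieAlgebra {
  lbr : V -> V -> V;
  lbr_linl : forall (a : F) (x y z : V), lbr (a *: x + y) z = a *: lbr x z + lbr y z;
  lbr_linr : forall (a : F) (x y z : V), lbr z (a *: x + y) = a *: lbr z x + lbr z y;
  lbr_alt : forall x : V, lbr x x = 0;
  lbr_jacobi : forall x y z : V,
    lbr x (lbr y z) + lbr y (lbr z x) + lbr z (lbr x y) = 0
}.

Definition rnest (F : fieldType) (V : vectType F) (L : lie_algebra V)
  (s : seq V) (y : V) : V := foldr (lbr L) y s.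

(* right-nested bracket [x1, ..., xn] of a nonempty list, with [x] = x;
   (the empty list is never used; it is sent to 0) *)
Definition nest (F : fieldType) (V : vectType F) (L : lie_algebra V)
  (s : seq V) : V :=
  match s with
  | [::] => 0
  | x :: s' => rnest L (belast x s') (last x s')
  end.

Definition perfect (F : fieldType) (V : vectType F) (L : lie_algebra V) : Prop :=
  forall x : V, exists (n : nat) (c : 'I_n -> F) (a b : 'I_n -> V),
    x = \sum_(i < n) c i *: lbr L (a i) (b i).

(* Main.v *)
Require Import Defs.
From HB Require Import structures.
From mathcomp Require Import all_boot all_order all_algebra.
Import Order.TTheory GRing.Theory Num.Theory.
Set Implicit Arguments. Unset Strict Implicit.
Local Open Scope ring_scope.

Definition islin (F : fieldType) (V : vectType F) (T : V -> V) :=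
  forall c x y, T (c *: x + y) = c *: T x + T y.

Lemma islin0 (F : fieldType) (V : vectType F) (T : V -> V) : islin T -> T 0 = 0.
Proof.
move=> h; have := h (-1) 0 0; rewrite scaler0 addr0 scaleN1r.
by move=> e; rewrite {1}e addNr.
Qed.

Lemma islinD (F : fieldType) (V : vectType F) (T : V -> V) : islin T ->
  forall x y, T (x + y) = T x + T y.
Proof. by move=> h x y; have := h 1 x y; rewrite !scale1r. Qed.

Lemma islinZ (F : fieldType) (V : vectType F) (T : V -> V) : islin T ->
  forall c x, T (c *: x) = c *: T x.
Proof. by move=> h c x; have := h c x 0; rewrite addr0 (islin0 h) addr0. Qed.

Lemma islinN (F : fieldType) (V : vectType F) (T : V -> V) : islin T ->
  forall x, T (- x) = - T x.
Proof. by move=> h x; rewrite -scaleN1r islinZ // scaleN1r. Qed.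

Lemma islinB (F : fieldType) (V : vectType F) (T : V -> V) : islin T ->
  forall x y, T (x - y) = T x - T y.
Proof. by move=> h x y; rewrite islinD // islinN. Qed.

Lemma islin_comp (F : fieldType) (V : vectType F) (T1 T2 : V -> V) :
  islin T1 -> islin T2 -> islin (fun x => T1 (T2 x)).
Proof. by move=> h1 h2 c x y /=; rewrite h2 h1. Qed.

Lemma islin_add (F : fieldType) (V : vectType F) (T1 T2 : V -> V) :
  islin T1 -> islin T2 -> islin (fun x => T1 x + T2 x).
Proof.
move=> h1 h2 c x y /=; rewrite h1 h2 scalerDr.
by rewrite -!addrA; congr (_ + _); rewrite addrCA.
Qed.

Lemma islin_scale (F : fieldType) (V : vectType F) (T : V -> V) (d : F) :
  islin T -> islin (fun x => d *: T x).
Proof. by move=> h c x y /=; rewrite h scalerDr !scalerA mulrC. Qed.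

Lemma islin_opp (F : fieldType) (V : vectType F) (T : V -> V) :
  islin T -> islin (fun x => - T x).
Proof. by move=> h c x y /=; rewrite h opprD scalerN. Qed.

Lemma islin_sub (F : fieldType) (V : vectType F) (T1 T2 : V -> V) :
  islin T1 -> islin T2 -> islin (fun x => T1 x - T2 x).
Proof. by move=> h1 h2; apply: islin_add => //; apply: islin_opp. Qed.

Lemma islin_lin (F : fieldType) (V : vectType F) (f : {linear V -> V}) : islin f.
Proof. by move=> c x y; rewrite linearP. Qed.

Lemma islin_brr (F : fieldType) (V : vectType F) (L : lie_algebra V) a :
  islin (lbr L a).
Proof. by move=> c x y; rewrite lbr_linr. Qed.

Lemma islin_brl (F : fieldType) (V : vectType F) (L : lie_algebra V) x :
  islin (fun a => lbr L a x).
Proof. by move=> c a b; rewrite lbr_linl. Qed.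

Lemma islin_rnest (F : fieldType) (V : vectType F) (L : lie_algebra V) u :
  islin (rnest L u).
Proof.
elim: u => [|a u IH] c x y //=.
by rewrite /rnest /= -/(rnest L u x) -/(rnest L u y) -/(rnest L u _) IH lbr_linr.
Qed.

Lemma rnest_cons (F : fieldType) (V : vectType F) (L : lie_algebra V) a u y :
  rnest L (a :: u) y = lbr L a (rnest L u y).
Proof. by []. Qed.

Lemma rnest_rcons (F : fieldType) (V : vectType F) (L : lie_algebra V) u b y :
  rnest L (rcons u b) y = rnest L u (lbr L b y).
Proof. by rewrite /rnest foldr_rcons. Qed.

Lemma nest_rcons (F : fieldType) (V : vectType F) (L : lie_algebra V) u y :
  nest L (rcons u y) = rnest L u y.
Proof. by case: u => [|a u] //=; rewrite belast_rcons last_rcons. Qed.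

Lemma perfect_ind (F : fieldType) (V : vectType F) (L : lie_algebra V)
  (hperf : perfect L) (T : V -> V) : islin T ->
  (forall a b, T (lbr L a b) = 0) -> forall y, T y = 0.
Proof.
move=> hT hab y; have [n [c [a [b ->]]]] := hperf y.
elim/big_ind: _ => [|u v hu hv|i _]; first exact: islin0.
  by rewrite islinD // hu hv addr0.
by rewrite islinZ // hab scaler0.
Qed.

Lemma span_ind (F : fieldType) (V : vectType F) (L : lie_algebra V)
  (hperf : perfect L) (j : nat) : forall (T : V -> V), islin T ->
  (forall u x, size u = j -> T (rnest L u x) = 0) -> forall y, T y = 0.
Proof.
elim: j => [|j IH] T hT h y.
  by have := h [::] y erefl.
apply: (perfect_ind hperf hT) => a.
apply: (IH (fun b => T (lbr L a b))).
  by apply: islin_comp => //; apply: islin_brr.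
by move=> u x hu; rewrite -rnest_cons h //= hu.
Qed.

Lemma anticomm (F : fieldType) (V : vectType F) (L : lie_algebra V) x y :
  lbr L x y = - lbr L y x.
Proof.
have := lbr_alt L (x + y).
rewrite (islinD (islin_brl L _)) !(islinD (islin_brr L _)) !lbr_alt add0r addr0.
by move/eqP; rewrite addr_eq0 => /eqP.
Qed.

Lemma jac (F : fieldType) (V : vectType F) (L : lie_algebra V) b c x :
  lbr L (lbr L b c) x = lbr L b (lbr L c x) - lbr L c (lbr L b x).
Proof.
have := lbr_jacobi L b c x.
rewrite (anticomm L x (lbr L b c)) (anticomm L x b) (islinN (islin_brr L c)).
move/eqP; rewrite addr_eq0 => /eqP ->.
by rewrite opprK.
Qed.

Lemma islin_sum (F : fieldType) (V : vectType F) (T : V -> V) (I : Type)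
  (r : seq I) (P : pred I) (G : I -> V) : islin T ->
  T (\sum_(i <- r | P i) G i) = \sum_(i <- r | P i) T (G i).
Proof.
move=> h; elim/big_rec2: _ => [|i x y _ <-]; first exact: islin0.
exact: islinD.
Qed.

Fixpoint Psi (F : fieldType) (V : vectType F) (L : lie_algebra V) (f : V -> V)
  (u : seq V) (y : V) : V :=
  match u with
  | [::] => f y
  | a :: u' => f (rnest L (a :: u') y) + lbr L a (Psi L f u' y)
  end.

Lemma sum_Psi (F : fieldType) (V : vectType F) (L : lie_algebra V) (f : {linear V -> V})
  u y :
  \sum_(1 <= i < (size u).+1) rnest L (take i (rcons u y)) (f (nest L (drop i (rcons u y))))
  = Psi L f u y - f (rnest L u y).
Proof.
elim: u => [|a u IH] /=.
  by rewrite big_geq // subrr.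
rewrite big_nat_recl //=.
rewrite -(islin_sum _ _ _ (islin_brr L a)) IH take0 drop0 nest_rcons /=.
by rewrite (islinB (islin_brr L a)) addrC subrK addrAC subrr add0r.
Qed.

Lemma Psi_rcons (F : fieldType) (V : vectType F) (L : lie_algebra V) (f : {linear V -> V})
  u b x : Psi L f (rcons u b) x = Psi L f u (lbr L b x) + rnest L u (lbr L b (f x)).
Proof.
elim: u => [|a u IH] //.
rewrite rcons_cons.
have -> : Psi L f (a :: rcons u b) x =
  f (rnest L (a :: rcons u b) x) + lbr L a (Psi L f (rcons u b) x) by [].
have -> : Psi L f (a :: u) (lbr L b x) =
  f (rnest L (a :: u) (lbr L b x)) + lbr L a (Psi L f u (lbr L b x)) by [].
by rewrite IH (islinD (islin_brr L a)) addrA !rnest_cons !rnest_rcons.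
Qed.

Lemma comb3 (V : zmodType) (a1 b1 c1 a2 b2 c2 : V) :
  a1 + b1 - c1 = 0 -> a2 + b2 - c2 = 0 -> (a1 - a2) + (b1 - b2) - (c1 - c2) = 0.
Proof.
move=> /subr0_eq <- /subr0_eq <-.
have e : a1 + b1 - (a2 + b2) = a1 - a2 + (b1 - b2) by rewrite opprD addrACA.
by rewrite e subrr.
Qed.

Lemma addrT (V : zmodType) (a b c : V) : a + b - c - a = b - c.
Proof. by rewrite addrC !addrA addNr add0r. Qed.

Unset Implicit Arguments. Set Strict Implicit.

Ltac lintac := repeat first [ apply: islin_sub | apply: islin_add | apply: islin_scale
  | apply: islin_lin | apply: islin_brr | apply: islin_brl | apply: islin_rnest
  | apply: islin_comp ].

Theorem lemma2 (F : closedFieldType) (hF : [pchar F] =i pred0)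
  (V : vectType F) (L : lie_algebra V) (hperf : perfect L)
  (k : nat) (hk : (2 <= k)%N) (m : F) (hm0 : m != 0)
  (hmneg : forall n : nat, m != - (n.+1)%:R)
  (f : {linear V -> V})
  (hf : forall xs : seq V, size xs = k ->
     m *: f (nest L xs)
     + \sum_(1 <= i < k) rnest L (take i xs) (f (nest L (drop i xs))) = 0) :
  forall x : V, f x = 0.
Proof.
case: k hk hf => [|[|n']] // _ hf.
have A : forall u y, size u = n'.+1 ->
    m *: f (rnest L u y) + (Psi L f u y - f (rnest L u y)) = 0.
  move=> u y hu; have := hf (rcons u y); rewrite size_rcons hu => /(_ erefl).
  by rewrite nest_rcons -hu sum_Psi.
have A' : forall c w x, size w = n' ->
    m *: f (lbr L c (rnest L w x)) + lbr L c (Psi L f w x) = 0.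
  move=> c w x hw; have := A (c :: w) x (congr1 succn hw).
  have -> : Psi L f (c :: w) x = f (rnest L (c :: w) x) + lbr L c (Psi L f w x) by [].
  by rewrite addrAC subrr add0r rnest_cons.
pose RL s := forall a w x, size w = s ->
  m *: f (lbr L a (rnest L w x)) + (1 - m) *: lbr L a (f (rnest L w x))
  - lbr L a (rnest L w (f x)) = 0.
have RLn : RL n'.+1.
  move=> a w x hw.
  have eP : lbr L a (Psi L f w x) = (1 - m) *: lbr L a (f (rnest L w x)).
    have := A w x hw.
    move/(congr1 (lbr L a)); rewrite (islin0 (islin_brr L a)).
    rewrite (islinD (islin_brr L a)) (islinZ (islin_brr L a)) (islinB (islin_brr L a)).
    rewrite addrCA; move/eqP; rewrite addr_eq0 => /eqP ->.
    by rewrite opprB scalerBl scale1r.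
  have R := A (belast a w) (lbr L (last a w) x).
  rewrite size_belast hw in R; have {}R := R erefl.
  have e2 : Psi L f (belast a w) (lbr L (last a w) x) =
      Psi L f (a :: w) x - rnest L (a :: w) (f x).
    by rewrite (lastI a w) Psi_rcons rnest_rcons addrK.
  rewrite e2 -rnest_rcons -lastI in R.
  have e3 : Psi L f (a :: w) x = f (rnest L (a :: w) x) + lbr L a (Psi L f w x) by [].
  rewrite e3 eP !rnest_cons in R.
  by rewrite addrT addrA in R.
  have RLd : forall s, RL s.+2 -> RL s.+1.
  move=> s h2 a w0 x hw0.
  case: w0 hw0 => [|d0 w0] // hw0.
  rewrite (lastI d0 w0) !rnest_rcons.
  have hs : size (belast d0 w0) = s by rewrite size_belast; case: hw0.
  move: (last d0 w0) => d; move: (belast d0 w0) hs => w hs.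
  pose T := fun d => m *: f (lbr L a (rnest L w (lbr L d x))) +
    (1 - m) *: lbr L a (f (rnest L w (lbr L d x))) -
    lbr L a (rnest L w (lbr L d (f x))).
  suff : T d = 0 by [].
  apply: (perfect_ind hperf) => [|b c].
    rewrite /T; lintac.
  have h1 := h2 a (rcons (rcons w b) c) x.
  have h1' := h2 a (rcons (rcons w c) b) x.
  rewrite !size_rcons hs !rnest_rcons in h1 h1'.
  have := comb3 (h1 erefl) (h1' erefl).
  rewrite /T !jac.
  rewrite !(islinB (islin_rnest L w)) !(islinB (islin_brr L a)) !(islinB (islin_lin f)).
  by rewrite !(islinB (islin_brr L a)) !scalerBr.
  have RL1 : RL 1%N.
    have : forall t, (t <= n')%N -> RL (n' - t).+1.
      elim=> [|t IH] ht; first by rewrite subn0.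
      have := IH (ltnW ht); rewrite subnS.
      have -> : (n' - t = (n' - t).-1.+1)%N by rewrite prednK // subn_gt0.
      exact: RLd.
    by move/(_ n' (leqnn _)); rewrite subnn.
  have H : forall b c z, lbr L b (f (lbr L c z)) - lbr L c (f (lbr L b z))
      - f (lbr L (lbr L b c) z) = 0.
    move=> b c.
    apply: (span_ind hperf (j := n')); first by lintac.
    move=> u x hu.
    have e : forall c, m *: f (lbr L c (rnest L u x)) = - lbr L c (Psi L f u x).
      by move=> c'; apply/eqP; rewrite -addr_eq0; apply/eqP; apply: A'.
    apply: (scalerI hm0); rewrite scaler0.
    rewrite !scalerBr -!(islinZ (islin_brr L _)) !e.
    rewrite !(islinN (islin_brr L _)) jac.
    by rewrite !opprK [- _ + _]addrC -opprB addNr.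
  have RL0 : forall e x, f (lbr L e x) = lbr L e (f x).
    move=> e x; apply/eqP; rewrite -subr_eq0; apply/eqP; move: e.
    apply: (perfect_ind hperf); first by lintac.
    move=> a d.
    have h1 := RL1 a [:: d] x erefl.
    have h2 := RL1 d [:: a] x erefl.
    have := comb3 h1 h2.
    rewrite !rnest_cons /=.
    rewrite -!scalerBr -(islinB (islin_lin f)) -!jac (subr0_eq (H a d x)).
    by rewrite -scalerDl [m + _]addrC subrK scale1r.
  have fn : forall u y, f (rnest L u y) = rnest L u (f y).
    by elim=> [|a u IH] y //; rewrite !rnest_cons RL0 IH.
  have PsiN : forall u y, Psi L f u y = (size u).+1%:R *: f (rnest L u y).
    elim=> [|a u IH] y; first by rewrite scale1r.
    have -> : Psi L f (a :: u) y = f (rnest L (a :: u) y) + lbr L a (Psi L f u y) by [].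
    rewrite IH (islinZ (islin_brr L a)) -RL0 -rnest_cons.
    by rewrite rnest_cons -[(size u).+2%:R]natr1 scalerDl scale1r addrC.
  have S := @span_ind _ _ L hperf n'.+1 f (islin_lin f).
  apply: S.
  move=> u y hu; have := A u y hu.
  rewrite PsiN hu -natr1 scalerDl scale1r addrK -scalerDl => /eqP.
  rewrite scaler_eq0 => /orP [|/eqP //].
  rewrite addr_eq0 => h; exfalso; move: (hmneg n'); by rewrite h.
Qed.
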